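(* Let $G$ be an étale locally compact Hausdorff groupoid with unit space $G^{(0)}$, and let $\Sigma \rightarrow G$ be a twist over $G$. Then for each $f \in \ell^2(\Sigma; G)$ the function on $G^{(0)}$ defined by $$x \mapsto \max \left\{ \sum_{\gamma \in G_x} |f(\gamma)|^2,\ \sum_{\gamma \in G^x} |f(\gamma)|^2\right\}^{1/2}$$ is continuous.
   Context: A twist $\Sigma\rightarrow G$ is a locally trivial central extension $\mathbb{T}\times G^{(0)} \to \Sigma \to G$ of groupoids. It determines a complex line bundle $L=(\mathbb{C}\times\Sigma)/\sim$ over $G$, where $(z_1,\sigma_1)\sim(z_2,\sigma_2)$ iff $(z_1,\sigma_1)=(\overline{\lambda}z_2,\lambda\cdot\sigma_2)$ for some $\lambda\in\mathbb{T}$; the absolute value $|[z,\sigma]|=|z|$ is well defined. $C_c(\Sigma;G)$ denotes the continuous compactly supported sections $G\to L$. For $x\in G^{(0)}$, $G_x=\{\gamma: s(\gamma)=x\}$ and $G^x=\{\gamma: r(\gamma)=x\}$. The $2$-norm on $C_c(\Sigma;G)$ is $\|f\|_2=\sup_{x\in G^{(0)}}\max\{\sum_{\gamma\in G_x}|f(\gamma)|^2,\sum_{\gamma\in G^x}|f(\gamma)|^2\}^{1/2}$, and $\ell^2(\Sigma;G)$ is the completion of $C_c(\Sigma;G)$ in $\|\cdot\|_2$, realized as a space of continuous sections of $L$ (the $2$-norm dominates the sup-norm). *)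

(* Defs.v *)
From HB Require Import structures.
From mathcomp Require Import all_boot all_order all_algebra.
From mathcomp Require Import all_classical all_reals all_analysis.
Set Implicit Arguments. Unset Strict Implicit. Unset Printing Implicit Defensive.
Import Order.TTheory GRing.Theory Num.Theory.
Import numFieldNormedType.Exports.
Local Open Scope classical_set_scope.
Local Open Scope ring_scope.

(** Complex numbers are modelled as [R * R] (product topology). *)
Definition cmul (R : realType) (a b : R * R) : R * R :=
  (a.1 * b.1 - a.2 * b.2, a.1 * b.2 + a.2 * b.1).
Definition cconj (R : realType) (a : R * R) : R * R := (a.1, - a.2).
Definition csub (R : realType) (a b : R * R) : R * R := (a.1 - b.1, a.2 - b.2).
Definition cabs2 (R : realType) (a : R * R) : R := a.1 ^+ 2 + a.2 ^+ 2.
Definition czero (R : realType) : R * R := (0, 0).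
Definition circle (R : realType) : set (R * R) := [set z | cabs2 z = 1].

(** Groupoid operations (composition is total, only meaningful on composable pairs). *)
Record groupoid (G : Type) := Groupoid {
  src : G -> G; rng : G -> G; mul : G -> G -> G; inv : G -> G }.

Definition units (G : Type) (g : groupoid G) : set G := range (src g).

Definition is_groupoid (G : Type) (g : groupoid G) : Prop :=
  [/\ (forall x, src g (src g x) = src g x /\ rng g (src g x) = src g x
                 /\ src g (rng g x) = rng g x /\ rng g (rng g x) = rng g x),
      (forall x y, src g x = rng g y ->
          src g (mul g x y) = src g y /\ rng g (mul g x y) = rng g x),
      (forall x y z, src g x = rng g y -> src g y = rng g z ->
          mul g (mul g x y) z = mul g x (mul g y z)),
      (forall x, mul g (rng g x) x = x /\ mul g x (src g x) = x) &
      (forall x, src g (inv g x) = rng g x /\ rng g (inv g x) = src g x /\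
          mul g x (inv g x) = rng g x /\ mul g (inv g x) x = src g x)].

Definition is_top_groupoid (G : topologicalType) (g : groupoid G) : Prop :=
  [/\ is_groupoid g, continuous (src g), continuous (rng g), continuous (inv g) &
      {within [set p : G * G | src g p.1 = rng g p.2],
         continuous (fun p => mul g p.1 p.2)}].

Definition local_homeo (G : topologicalType) (f : G -> G) : Prop :=
  continuous f /\
  forall x, exists U : set G, [/\ open U, U x,
     (forall a b, U a -> U b -> f a = f b -> a = b) &
     (forall V, open V -> V `<=` U -> open (f @` V))].

Definition etale_lch_groupoid (G : topologicalType) (g : groupoid G) : Prop :=
  [/\ is_top_groupoid g, hausdorff_space G, locally_compact [set: G] &
      local_homeo (rng g)].

(** Twist data: the quotient map [tpi : Sigma -> G] and the inclusion
    [tiota : T x Sigma^(0) -> Sigma] (unit spaces identified via [tpi]). *)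
Record twist_data (R : realType) (G S : Type) := TwistData {
  tpi : S -> G; tiota : R * R -> S -> S }.

Definition is_twist (R : realType) (G S : topologicalType)
  (gG : groupoid G) (gS : groupoid S) (t : twist_data R G S) : Prop :=
  let pi := tpi t in let io := fun p : (R * R) * S => tiota t p.1 p.2 in
  let D := [set p : (R * R) * S | circle p.1 /\ units gS p.2] in
  is_top_groupoid gS /\
      [/\ continuous pi, (forall A, open A -> open (pi @` A)),
          (forall y, exists s, pi s = y),
          (forall s, src gG (pi s) = pi (src gS s) /\ rng gG (pi s) = pi (rng gS s)) &
          (forall s u, src gS s = rng gS u -> pi (mul gS s u) = mul gG (pi s) (pi u))] /\
      [/\ (forall a b, units gS a -> units gS b -> pi a = pi b -> a = b),
          pi @` units gS = units gG &
          (forall A, open A -> exists B, open B /\ pi @` (A `&` units gS) = B `&` units gG)] /\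
      [/\ (forall l u, circle l -> units gS u ->
              src gS (tiota t l u) = u /\ rng gS (tiota t l u) = u),
          (forall l m u, circle l -> circle m -> units gS u ->
              tiota t (cmul l m) u = mul gS (tiota t l u) (tiota t m u)),
          (forall p q, D p -> D q -> io p = io q -> p = q),
          {within D, continuous io} &
          (forall A, open A -> exists B, open B /\
              io @` (A `&` D) = B `&` (pi @^-1` units gG))] /\
      io @` D = pi @^-1` units gG /\
      (forall l s, circle l ->
          mul gS (tiota t l (rng gS s)) s = mul gS s (tiota t l (src gS s))) /\
      (forall y, exists U : set G, exists c : G -> S,
          [/\ open U, U y, {within U, continuous c} & forall z, U z -> pi (c z) = z]).

Definition tact (R : realType) (G S : Type) (gS : groupoid S)
  (t : twist_data R G S) (l : R * R) (s : S) : S :=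
  mul gS (tiota t l (rng gS s)) s.

(** Sections of the line bundle L = (C x Sigma)/~ are represented by functions
    F : Sigma -> C with F (l . s) = conj(l) F(s); the section is
    gamma |-> [F s, s] for any s over gamma. *)
Definition is_section (R : realType) (G S : Type) (gS : groupoid S)
  (t : twist_data R G S) (F : S -> R * R) : Prop :=
  forall l s, circle l -> F (tact gS t l s) = cmul (cconj l) (F s).

Local Open Scope ereal_scope.

(** |f(gamma)|^2 (the same for all s over gamma). *)
Definition sabs2 (R : realType) (G S : choiceType) (t : twist_data R G S)
  (F : S -> R * R) (y : G) : \bar R :=
  ereal_sup [set (cabs2 (F s))%:E | s in tpi t @^-1` [set y]].

Definition sum_src (R : realType) (G S : choiceType) (gG : groupoid G)
  (t : twist_data R G S) (F : S -> R * R) (x : G) : \bar R :=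
  \esum_(y in [set y | src gG y = x]) sabs2 t F y.

Definition sum_rng (R : realType) (G S : choiceType) (gG : groupoid G)
  (t : twist_data R G S) (F : S -> R * R) (x : G) : \bar R :=
  \esum_(y in [set y | rng gG y = x]) sabs2 t F y.

Definition norm2sq (R : realType) (G S : choiceType) (gG : groupoid G)
  (t : twist_data R G S) (F : S -> R * R) : \bar R :=
  ereal_sup [set Order.max (sum_src gG t F x) (sum_rng gG t F x) | x in units gG].

Definition Cc_sec (R : realType) (G S : topologicalType) (gS : groupoid S)
  (t : twist_data R G S) (F : S -> R * R) : Prop :=
  [/\ is_section gS t F, continuous F &
      compact (closure (tpi t @` [set s | F s != czero R]))].

Definition l2_sec (R : realType) (G S : topologicalType) (gG : groupoid G)
  (gS : groupoid S) (t : twist_data R G S) (F : S -> R * R) : Prop :=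
  [/\ is_section gS t F, continuous F &
      exists Fn : nat -> S -> R * R, (forall n, Cc_sec gS t (Fn n)) /\
        (fun n => norm2sq gG t (fun s => csub (F s) (Fn n s))) @ \oo --> 0].

(* Main.v *)
Require Import Defs.
From HB Require Import structures.
From mathcomp Require Import all_boot all_order all_algebra finmap.
From mathcomp Require Import all_classical all_reals all_analysis.
From mathcomp Require Import ring lra.
Import Order.TTheory GRing.Theory Num.Theory.
Import numFieldNormedType.Exports.
Set Implicit Arguments. Unset Strict Implicit. Unset Printing Implicit Defensive.
Local Open Scope classical_set_scope.
Local Open Scope ring_scope.
Notation gmul := Defs.mul.
Notation ginv := Defs.inv.
Section Gpd.
Variables (G : Type) (g : groupoid G) (Hg : is_groupoid g).

Lemma gp_inv_uniq a b : src g a = rng g b -> gmul g a b = rng g a -> b = ginv g a.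
Proof.
case: Hg => H1 H2 H3 H4 H5 sab mab.
have [i1 [i2 [i3 i4]]] := H5 a.
have [u1 u2] := H4 b.
rewrite -u1 -sab -i4 H3 ?mab//.
have [_ u4] := H4 (ginv g a); by rewrite -i1 u4.
Qed.

Lemma gp_invK x : ginv g (ginv g x) = x.
Proof.
have [_ _ _ _ H5] := Hg; have [i1 [i2 [i3 i4]]] := H5 x.
symmetry; apply: gp_inv_uniq; first by rewrite i1.
by rewrite i4 i2.
Qed.
End Gpd.
Lemma cabs2_cmul (R : realType) (a b : R * R) : cabs2 (cmul a b) = cabs2 a * cabs2 b.
Proof. rewrite /cabs2 /cmul /=; ring. Qed.

Lemma twist_fiber (R : realType) (G S : topologicalType) (gG : groupoid G) (gS : groupoid S)
  (t : twist_data R G S) (HgG : is_groupoid gG) (Ht : is_twist gG gS t)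
  (F : S -> R * R) (HF : is_section gS t F) s s' :
  tpi t s = tpi t s' -> cabs2 (F s') = cabs2 (F s).
Proof.
move=> ess'.
case: Ht => [[HgS _ _ _ _] [[_ _ _ hom1 hom2] [[uinj _ _] [[iosr _ _ _ _] [imgD _]]]]].
have HgS' := HgS; case: HgS' => S1 S2 S3 S4 S5.
have unit_src x : units gS (src gS x) by exists x.
have unit_rng x : units gS (rng gS x) by exists (rng gS x) => //; case: (S1 x) => _ [_ [->]].
have ssrc : src gS s' = src gS s.
  apply: uinj => //; rewrite -(proj1 (hom1 s)) -(proj1 (hom1 s')) ess' //.
have srng : rng gS s' = rng gS s.
  apply: uinj => //; rewrite -(proj2 (hom1 s)) -(proj2 (hom1 s')) ess' //.
have [i1 [i2 [i3 i4]]] := S5 s.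
have piinv : tpi t (ginv gS s) = ginv gG (tpi t s).
  apply: (gp_inv_uniq HgG).
    by rewrite (proj1 (hom1 s)) (proj2 (hom1 _)) i2.
  by rewrite -hom2 ?i2 // i3 (proj2 (hom1 s)).
pose w := gmul gS s' (ginv gS s).
have cw : src gS s' = rng gS (ginv gS s) by rewrite i2 ssrc.
have pw : (tpi t @^-1` units gG) w.
  rewrite /w /= hom2 // piinv -ess'.
  have [_ _ _ _ G5] := HgG; have [_ [_ [-> _]]] := G5 (tpi t s).
  exists (rng gG (tpi t s)) => //.
  by case: HgG => G1 _ _ _ _; case: (G1 (tpi t s)) => _ [_ [->]].
rewrite -imgD in pw; case: pw => [[l u]] [/= cl uu] wE.
have [_ ru] := iosr l u cl uu.
have rw : rng gS w = rng gS s' by rewrite /w (proj2 (S2 _ _ cw)).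
have -> : s' = tact gS t l s.
  rewrite /tact -srng -rw -wE ru wE /w S3 //.
  idtac.
  by rewrite i4 -ssrc (proj2 (S4 s')).
rewrite HF // cabs2_cmul.
have : cabs2 (cconj l) = 1 by rewrite /cabs2 /= sqrrN; exact: cl.
by move=> ->; rewrite mul1r.
Qed.
Lemma mink_seq (R : realType) (T : Type) (s : seq T) (u v : T -> R) :
  (forall i, 0 <= u i) -> (forall i, 0 <= v i) ->
  \sum_(i <- s) (u i + v i) ^+ 2 <=
  (Num.sqrt (\sum_(i <- s) u i ^+ 2) + Num.sqrt (\sum_(i <- s) v i ^+ 2)) ^+ 2.
Proof.
move=> u0 v0; elim: s => [|x s IH]; first by rewrite !big_nil sqrtr0 addr0 expr0n.
rewrite !big_cons.
set A := \sum_(i <- s) _ in IH *.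
set P := \sum_(i <- s) u i ^+ 2 in IH *.
set Q := \sum_(i <- s) v i ^+ 2 in IH *.
have P0 : 0 <= P by apply: sumr_ge0 => i _; exact: sqr_ge0.
have Q0 : 0 <= Q by apply: sumr_ge0 => i _; exact: sqr_ge0.
have hp := sqr_sqrtr P0; have hq := sqr_sqrtr Q0.
have hp' : Num.sqrt (u x ^+ 2 + P) ^+ 2 = u x ^+ 2 + P by rewrite sqr_sqrtr // addr_ge0 // sqr_ge0.
have hq' : Num.sqrt (v x ^+ 2 + Q) ^+ 2 = v x ^+ 2 + Q by rewrite sqr_sqrtr // addr_ge0 // sqr_ge0.
move: (sqrtr_ge0 P) (sqrtr_ge0 Q) (sqrtr_ge0 (u x ^+ 2 + P)) (sqrtr_ge0 (v x ^+ 2 + Q)) (u0 x) (v0 x).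
move: hp hq hp' hq' IH.
set p := Num.sqrt P; set q := Num.sqrt Q; set p' := Num.sqrt (_ + P); set q' := Num.sqrt (_ + Q).
move=> hp hq hp' hq' IH p0 q0 p'0 q'0 ux vx.
have key : p * q + u x * v x <= p' * q'.
  have e : (p' * q') ^+ 2 = (p * q + u x * v x) ^+ 2 + (p * v x - u x * q) ^+ 2.
    rewrite exprMn hp' hq' -hp -hq; ring.
  have : (p * q + u x * v x) ^+ 2 <= (p' * q') ^+ 2 by rewrite e lerDl sqr_ge0.
  rewrite ler_pXn2r ?nnegrE ?mulr_ge0 ?addr_ge0 ?mulr_ge0 //.
have E1 : (p'+q')^+2 = p'^+2 + q'^+2 + 2*(p'*q') by ring.
have E2 : (p+q)^+2 = p^+2+q^+2+2*(p*q) by ring.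
have E3 : (u x + v x)^+2 = u x^+2 + v x^+2 + 2*(u x * v x) by ring.
rewrite E1 E3 hp' hq'; move: IH; rewrite E2 hp hq; lra.
Qed.
Lemma esum_fin_le (R : realType) (T : choiceType) (A : set T) (b : T -> \bar R) (B : R) y :
  (forall y, A y -> (0 <= b y)%E) -> esum A b = B%:E -> A y -> b y \is a fin_num.
Proof.
move=> b0 eB Ay; rewrite ge0_fin_numE ?b0 //.
apply: (@le_lt_trans _ _ B%:E); last exact: ltry.
rewrite -eB; apply: esum_ge; exists [set y]; last by rewrite fsbig_set1.
by split; [exact: finite_set1| move=> z ->].
Qed.

Lemma esum_mink (R : realType) (T : choiceType) (A : set T) (a b c : T -> \bar R) (B C : R) :
  (forall y, A y -> (0 <= b y)%E) -> (forall y, A y -> (0 <= c y)%E) ->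
  (forall y, A y -> b y \is a fin_num -> c y \is a fin_num ->
     (a y <= ((Num.sqrt (fine (b y)) + Num.sqrt (fine (c y))) ^+ 2)%:E)%E) ->
  esum A b = B%:E -> esum A c = C%:E ->
  (esum A a <= ((Num.sqrt B + Num.sqrt C) ^+ 2)%:E)%E.
Proof.
move=> b0 c0 abc eB eC.
apply: ge_ereal_sup => _ [X [finX XA] <-].
have bf y : X y -> b y \is a fin_num by move=> /XA; exact: esum_fin_le b0 eB.
have cf y : X y -> c y \is a fin_num by move=> /XA; exact: esum_fin_le c0 eC.
apply: (@le_trans _ _ (\sum_(i \in X) ((Num.sqrt (fine (b i)) + Num.sqrt (fine (c i))) ^+ 2)%:E)%E).
  by apply: lee_fsum => // i Xi; apply: abc; [exact: XA|exact: bf|exact: cf].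
rewrite fsumEFin // lee_fin.
have sB : \sum_(i \in X) fine (b i) <= B.
  rewrite -lee_fin -fsumEFin // -eB; apply: esum_ge; exists X => //.
  rewrite le_eqVlt; apply/orP; left; apply/eqP; apply: eq_fsbigr => w Xw; rewrite fineK // bf //; by move: Xw; rewrite inE.
have sC : \sum_(i \in X) fine (c i) <= C.
  rewrite -lee_fin -fsumEFin // -eC; apply: esum_ge; exists X => //.
  rewrite le_eqVlt; apply/orP; left; apply/eqP; apply: eq_fsbigr => w Xw; rewrite fineK // cf //; by move: Xw; rewrite inE.
move: sB sC; rewrite !fsbig_finite //= => sB sC.
apply: le_trans (@mink_seq R T (finmap.enum_fset (fset_set X)) (fun i => Num.sqrt (fine (b i))) (fun i => Num.sqrt (fine (c i))) (fun i => sqrtr_ge0 _) (fun i => sqrtr_ge0 _)) _.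
have eb : \sum_(i <- finmap.enum_fset (fset_set X)) Num.sqrt (fine (b i)) ^+ 2 = \sum_(i <- finmap.enum_fset (fset_set X)) fine (b i).
  rewrite big_seq [RHS]big_seq; apply: eq_bigr => i; rewrite in_fset_set // inE => Xi.
  by rewrite sqr_sqrtr // fine_ge0 // b0 //; apply: XA; move: Xi; rewrite ?inE.
have ec : \sum_(i <- finmap.enum_fset (fset_set X)) Num.sqrt (fine (c i)) ^+ 2 = \sum_(i <- finmap.enum_fset (fset_set X)) fine (c i).
  rewrite big_seq [RHS]big_seq; apply: eq_bigr => i; rewrite in_fset_set // inE => Xi.
  by rewrite sqr_sqrtr // fine_ge0 // c0 //; apply: XA; move: Xi; rewrite ?inE.
rewrite eb ec.
have h1 := ler_wsqrtr sB; have h2 := ler_wsqrtr sC.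
have := sqrtr_ge0 (\sum_(i <- finmap.enum_fset (fset_set X)) fine (b i)).
have := sqrtr_ge0 (\sum_(i <- finmap.enum_fset (fset_set X)) fine (c i)).
move: h1 h2; nra.
Qed.
Definition ptd (G : topologicalType) (x : G) : Type := G.
HB.instance Definition _ (G : topologicalType) (x : G) := Topological.copy (ptd x) G.
HB.instance Definition _ (G : topologicalType) (x : G) := isPointed.Build (ptd x) x.
Lemma compact_cover_np (G : topologicalType) (x : G) (K : set G) : compact K -> @cover_compact G K.
Proof. move=> cK. have : @compact (ptd x) K by exact: cK. rewrite compact_cover. exact. Qed.
Lemma near_fin_forall (T : Type) (F : set_system T) (FF : Filter F) (I : choiceType)
  (E : set I) (P : I -> T -> Prop) : finite_set E ->
  (forall i, E i -> F (P i)) -> F (fun x => forall i, E i -> P i x).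
Proof.
move=> finE HP.
have := @filter_bigI T I (fset_set E) P F FF.
have H : forall i : I, i \in fset_set E -> F (P i).
  by move=> i; rewrite in_fset_set // inE; exact: HP.
move=> /(_ H); apply: filterS => x Hx i Ei; apply: Hx.
by rewrite /= in_fset_set // inE.
Qed.

Lemma subsingleton_finite (T : Type) (A : set T) :
  (forall a b, A a -> A b -> a = b) -> finite_set A.
Proof.
move=> Hs; have [[a Aa]|na] := pselect (exists a, A a).
  by apply: (@sub_finite_set _ _ [set a]); [move=> b Ab; exact: Hs|exact: finite_set1].
suff -> : A = set0 by exact: finite_set0.
by apply/seteqP; split => // b Ab; exfalso; apply: na; exists b.
Qed.

Lemma sum_cont_at (R : realType) (T : topologicalType) (I : eqType) (s : seq I) (f : I -> T -> R) (x0 : T) :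
  (forall i, i \in s -> f i x @[x --> x0] --> f i x0) ->
  (\sum_(i <- s) f i x) @[x --> x0] --> \sum_(i <- s) f i x0.
Proof.
elim: s => [|i s IH] Hf.
  have -> : (fun x => \sum_(i <- [::]) f i x) = fun _ => 0 by apply: funext => x; rewrite big_nil.
  by rewrite big_nil; exact: cvg_cst.
have -> : (fun x => \sum_(j <- i :: s) f j x) = (f i + fun x => \sum_(j <- s) f j x)
  by apply: funext => x; rewrite big_cons.
rewrite big_cons; apply: cvgD; first by apply: Hf; rewrite inE eqxx.
by apply: IH => j js; apply: Hf; rewrite inE js orbT.
Qed.
Section Etale.
Variables (R : realType) (G : topologicalType) (g : groupoid G).
Hypotheses (hG : hausdorff_space G) (hr : local_homeo (rng g)).
Variables (h : G -> R) (K : set G).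
Hypotheses (h0 : forall y, 0 <= h y) (hc : continuous h) (cK : compact K)
  (hK : forall y, h y != 0 -> K y).

Lemma rng_sum_local (x0 : G) : exists phi : G -> R,
  phi x @[x --> x0] --> phi x0 /\
  \forall x \near x0, (\esum_(y in [set y | rng g y = x]) (h y)%:E = (phi x)%:E)%E.
Proof.
have [rc hU] := hr.
have [U HU] := choice hU.
set Fib := [set y | rng g y = x0].
set E := K `&` Fib.
have finE : finite_set E.
  have cc := compact_cover_np x0 cK.
  have := cc G K U; case.
  - by move=> z _; case: (HU z).
  - by move=> y Ky; exists y => //; case: (HU y).
  move=> D' _ KD'.
  apply: (@sub_finite_set _ _ (\bigcup_(z in [set` D']) (U z `&` Fib))).
    by move=> y [Ky Fy]; have [z zD Uzy] := KD' y Ky; exists z.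
  apply: bigcup_finite; first exact: finite_fset.
  move=> z _; apply: subsingleton_finite => a b [Ua Fa] [Ub Fb].
  by case: (HU z) => _ _ inj _; apply: inj => //; rewrite Fa Fb.
pose sig := fun c x => xget c [set y | U c y /\ rng g y = x].
have sigP c x : (exists y, U c y /\ rng g y = x) -> U c (sig c x) /\ rng g (sig c x) = x.
  exact: xgetPex.
have sig_uniq c x y : U c y -> rng g y = x -> sig c x = y.
  move=> Uy ry; have [Us rs] := sigP c x (ex_intro _ y (conj Uy ry)).
  by case: (HU c) => _ _ inj _; apply: inj => //; rewrite rs.
have rU c : nbhs (rng g c) (rng g @` U c).
  case: (HU c) => oU Uc _ op; apply: open_nbhs_nbhs; split; [exact: op | by exists c].
have sig_cont c : sig c x @[x --> rng g c] --> c.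
  move=> O Oc.
  have [W [oW Wc] WO] : exists2 W, open_nbhs c W & W `<=` O by move: Oc; rewrite nbhsE.
  case: (HU c) => oU Uc inj op.
  apply: (@filterS _ (nbhs (rng g c)) _ (rng g @` (W `&` U c)) (sig c @^-1` O)).
    by move=> x [y [Wy Uy] <-]; rewrite /= (sig_uniq c _ y Uy erefl); exact: WO.
  apply: open_nbhs_nbhs; split; first by apply: op; [exact: openI | exact: subIsetr].
  by exists c.
have N1 : \forall x \near x0, forall c, E c -> exists y, U c y /\ rng g y = x.
  apply: near_fin_forall => // c [Kc Fc]; rewrite /Fib /= in Fc; rewrite -Fc.
  by apply: filterS (rU c) => x [y Uy <-]; exists y.
have N2 : \forall x \near x0, forall c, E c -> forall d, E d -> c <> d -> sig c x <> sig d x.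
  apply: near_fin_forall => // c Ec; apply: near_fin_forall => // d Ed.
  have [->|ncd] := pselect (c = d).
    by apply: filterE => x H; exfalso; exact: H.
  have [A [B [nA nB AB]]] : exists A B, [/\ nbhs c A, nbhs d B & forall y, A y -> B y -> False].
    apply: contrapT => H; apply: ncd; apply: hG => A B nA nB; apply: contrapT => Hn.
    by apply: H; exists A, B; split => // y Ay By; apply: Hn; exists y.
  have c1 : nbhs (rng g c) (sig c @^-1` A) := sig_cont c A nA.
  have c2 : nbhs (rng g d) (sig d @^-1` B) := sig_cont d B nB.
  case: Ec => _ Fc; case: Ed => _ Fd; rewrite /Fib /= in Fc Fd.
  rewrite Fc in c1; rewrite Fd in c2.
  by apply: filterS (filterI c1 c2) => x [Ax Bx] _ e; apply: (AB (sig c x)) => //; rewrite e.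
have N3 : \forall x \near x0, ~ (rng g @` (K `&` ~` (\bigcup_(c in E) U c))) x.
  set C := K `&` ~` _.
  have cC : compact C.
    apply: compact_closedI => //; rewrite closedC; apply: bigcup_open => c _.
    by case: (HU c).
  have cC' : compact (rng g @` C) := continuous_compact (continuous_subspaceT rc) cC.
  have clC := compact_closed hG cC'.
  have x0n : ~ (rng g @` C) x0.
    move=> [y [Ky nU] ry]; apply: nU; exists y; last by case: (HU y).
    by split.
  have oC : open (~` (rng g @` C)) by rewrite openC.
  exact: (open_nbhs_nbhs (conj oC x0n)).
exists (fun x => \sum_(c \in E) h (sig c x)); split.
  have -> : (fun x => \sum_(c \in E) h (sig c x)) =
            (fun x => \sum_(c <- fset_set E) h (sig c x)).
    by apply: funext => x; rewrite fsbig_finite.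
  rewrite fsbig_finite //.
  apply: (@sum_cont_at R G G _ (fun c x => h (sig c x)) x0) => c; rewrite in_fset_set // inE => Ec.
  have Fc : rng g c = x0 by case: Ec.
  have -> : sig c x0 = c by apply: sig_uniq => //; case: (HU c).
  have sc := sig_cont c; rewrite Fc in sc.
  have := cvg_comp _ _ sc (@hc c); exact.
apply: filterS (filterI N1 (filterI N2 N3)) => x [n1 [n2 n3]].
set Q := (fun c => sig c x) @` E.
have QF : Q `<=` [set y | rng g y = x].
  by move=> _ [c Ec <-]; exact: (sigP c x (n1 c Ec)).2.
rewrite (esumID Q); last by move=> y _; rewrite lee_fin.
rewrite (@esum1 _ _ (_ `&` ~` Q)); last first.
  move=> y [ry nQ]; have [->//|hy] := eqVneq (h y) 0.
  exfalso; have Ky := hK hy.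
  have : (\bigcup_(c in E) U c) y.
    by apply: contrapT => nU; apply: n3; exists y.
  by move=> [c Ec Uy]; apply: nQ; exists c => //; apply: sig_uniq.
rewrite adde0 setIidr // esum_image; last first.
  move=> a b; rewrite !inE => Ea Eb e; apply: contrapT => nab; exact: (n2 a Ea b Eb nab e).
rewrite esum_fset //; last by move=> c _; rewrite lee_fin.
by rewrite fsumEFin.
Qed.
End Etale.
Lemma cabs2_cont (R : realType) : continuous (@cabs2 R).
Proof.
move=> p; rewrite /cabs2.
have h1 : (fun a : R * R => a.1) @ p --> p.1 := @cvg_fst _ _ (nbhs p.1) (nbhs p.2) _.
have h2 : (fun a : R * R => a.2) @ p --> p.2 := @cvg_snd _ _ (nbhs p.1) (nbhs p.2) _.
have -> : (fun a : R * R => a.1 ^+ 2 + a.2 ^+ 2) =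
  ((fun a : R * R => a.1) \* (fun a => a.1)) + ((fun a : R * R => a.2) \* (fun a => a.2)).
  by apply: funext => a; rewrite /= !expr2.
apply: cvgD; apply: cvgM; first [exact: h1 | exact: h2 | exact: cvg_fst | exact: cvg_snd].
Qed.

Lemma local_fin_cont (R : realType) (G : topologicalType) (f : G -> \bar R) :
  (forall x0, exists phi : G -> R, phi x @[x --> x0] --> phi x0 /\
     \forall x \near x0, f x = (phi x)%:E) ->
  (forall x, f x \is a fin_num) /\ continuous (fun x => fine (f x)).
Proof.
move=> H; split.
  move=> x0; have [phi [_ Hn]] := H x0.
  by have -> := @nbhs_singleton G x0 _ Hn.
move=> x0; have [phi [pc Hn]] := H x0.
have e0 : fine (f x0) = phi x0 by rewrite (@nbhs_singleton G x0 _ Hn).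
rewrite /continuous_at e0.
apply: cvg_trans pc; apply: near_eq_cvg; apply: filterS Hn => x ->.
by [].
Qed.
Lemma src_sum_local (R : realType) (G : topologicalType) (g : groupoid G)
  (Hg : is_groupoid g) (ic : continuous (ginv g)) (hG : hausdorff_space G)
  (hr : local_homeo (rng g)) (h : G -> R) (K : set G)
  (h0 : forall y, 0 <= h y) (hc : continuous h) (cK : compact K)
  (hK : forall y, h y != 0 -> K y) (x0 : G) :
  exists phi : G -> R, phi x @[x --> x0] --> phi x0 /\
  \forall x \near x0, (\esum_(y in [set y | src g y = x]) (h y)%:E = (phi x)%:E)%E.
Proof.
have h0' : forall y, 0 <= (h \o ginv g) y by move=> y; exact: h0.
have hc' : continuous (h \o ginv g).
  by move=> y; apply: continuous_comp; [exact: ic | exact: hc].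
have cK' : compact (ginv g @` K) := continuous_compact (continuous_subspaceT ic) cK.
have hK' : forall y, (h \o ginv g) y != 0 -> (ginv g @` K) y.
  by move=> y /hK Ky; exists (ginv g y) => //; exact: gp_invK.
have [phi [pc Hn]] := rng_sum_local hG hr h0' hc' cK' hK' x0.
exists phi; split => //; apply: filterS Hn => x <-.
have [_ _ _ _ H5] := Hg.
apply: reindex_esum; split.
- by move=> y /= ry; rewrite (proj1 (H5 y)).
- by move=> a b _ _ e; rewrite -(gp_invK Hg a) e gp_invK.
- move=> z /= sz; exists (ginv g z) => /=; last exact: gp_invK.
  by rewrite (proj1 (proj2 (H5 z))).
Qed.
Lemma sabs2E (R : realType) (G S : topologicalType) (gG : groupoid G) (gS : groupoid S)
  (t : twist_data R G S) (HgG : is_groupoid gG) (Ht : is_twist gG gS t)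
  (F : S -> R * R) (HF : is_section gS t F) s :
  sabs2 t F (tpi t s) = (cabs2 (F s))%:E.
Proof.
rewrite /sabs2.
have -> : [set (cabs2 (F s0))%:E | s0 in tpi t @^-1` [set tpi t s]] = [set (cabs2 (F s))%:E].
  apply/seteqP; split => [_ [s' /= e <-] | _ ->].
    by rewrite /= (twist_fiber HgG Ht HF (esym e)).
  by exists s.
by rewrite ereal_sup1.
Qed.

Lemma sabs2_ge (R : realType) (G S : topologicalType) (t : twist_data R G S)
  (F : S -> R * R) s : ((cabs2 (F s))%:E <= sabs2 t F (tpi t s))%E.
Proof. by apply: ereal_sup_ubound; exists s. Qed.

Lemma Cc_sums (R : realType) (G S : topologicalType) (gG : groupoid G) (gS : groupoid S)
  (t : twist_data R G S) (HG : etale_lch_groupoid gG) (Ht : is_twist gG gS t)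
  (Fc : S -> R * R) (HFc : Cc_sec gS t Fc) :
  [/\ forall x, sum_rng gG t Fc x \is a fin_num, continuous (fun x => fine (sum_rng gG t Fc x)),
      forall x, sum_src gG t Fc x \is a fin_num & continuous (fun x => fine (sum_src gG t Fc x))].
Proof.
case: HG => [[HgG srcc rngc invc mulc] hG lc hr].
case: HFc => [secF contF cK].
have Ht' := Ht; case: Ht' => _ [[pic _ pisurj _ _] [_ [_ [_ [_ locsec]]]]].
pose h := fun y => fine (sabs2 t Fc y).
have hE s : h (tpi t s) = cabs2 (Fc s) by rewrite /h (sabs2E HgG Ht secF).
have sE y : sabs2 t Fc y = (h y)%:E.
  by have [s <-] := pisurj y; rewrite /h (sabs2E HgG Ht secF).
have h0 y : 0 <= h y.
  by have [s <-] := pisurj y; rewrite hE /cabs2 addr_ge0 // sqr_ge0.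
have hc : continuous h.
  move=> y; have [U [c [oU Uy cc pic']]] := locsec y.
  have cy : c x @[x --> y] --> c y.
    have := (subspace_continuousP _ _).1 cc y Uy.
    by rewrite within_interior // ((interior_id U).1 oU).
  have e : \forall z \near y, cabs2 (Fc (c z)) = h z.
    have : nbhs y U by apply: open_nbhs_nbhs.
    by apply: filterS => z Uz; rewrite -[in RHS](pic' z Uz) hE.
  rewrite /continuous_at -[in h y](pic' y Uy) hE.
  apply: cvg_trans (near_eq_cvg e) _.
  have c2 := cvg_comp _ _ cy (@contF (c y)).
  exact: (cvg_comp _ _ c2 (@cabs2_cont R (Fc (c y)))).
have hK y : h y != 0 -> closure (tpi t @` [set s | Fc s != Defs.czero R]) y.
  have [s <-] := pisurj y; rewrite hE => nz; apply: subset_closure; exists s => //=.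
  apply/negP => /eqP e0; move: nz; rewrite e0 /cabs2 /Defs.czero /= expr0n /= addr0 eqxx.
  by [].
have Lr : forall x0, exists phi : G -> R, phi x @[x --> x0] --> phi x0 /\
    \forall x \near x0, sum_rng gG t Fc x = (phi x)%:E.
  move=> x0; have [phi [pc Hn]] := rng_sum_local hG hr h0 hc cK hK x0.
  exists phi; split => //; apply: filterS Hn => x <-.
  by apply: eq_esum => y _; exact: sE.
have Ls : forall x0, exists phi : G -> R, phi x @[x --> x0] --> phi x0 /\
    \forall x \near x0, sum_src gG t Fc x = (phi x)%:E.
  move=> x0; have [phi [pc Hn]] := src_sum_local HgG invc hG hr h0 hc cK hK x0.
  exists phi; split => //; apply: filterS Hn => x <-.
  by apply: eq_esum => y _; exact: sE.
have [fr cr] := local_fin_cont Lr.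
have [fs cs] := local_fin_cont Ls.
by split.
Qed.
Lemma cabs_tri (R : realType) (a b : R * R) :
  cabs2 a <= (Num.sqrt (cabs2 (csub a b)) + Num.sqrt (cabs2 b)) ^+ 2.
Proof.
case: a b => [a1 a2] [b1 b2]; rewrite /cabs2 /csub /=.
set d1 := a1 - b1; set d2 := a2 - b2.
have -> : a1 = d1 + b1 by rewrite /d1 subrK.
have -> : a2 = d2 + b2 by rewrite /d2 subrK.
have D0 : 0 <= d1 ^+ 2 + d2 ^+ 2 by rewrite addr_ge0 // sqr_ge0.
have B0 : 0 <= b1 ^+ 2 + b2 ^+ 2 by rewrite addr_ge0 // sqr_ge0.
have hp := sqr_sqrtr D0; have hq := sqr_sqrtr B0.
have p0 := sqrtr_ge0 (d1 ^+ 2 + d2 ^+ 2); have q0 := sqrtr_ge0 (b1 ^+ 2 + b2 ^+ 2).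
move: hp hq p0 q0.
set p := Num.sqrt _; set q := Num.sqrt _ => hp hq p0 q0.
have key : d1 * b1 + d2 * b2 <= p * q.
  have e : (p * q) ^+ 2 = (d1 * b1 + d2 * b2) ^+ 2 + (d1 * b2 - d2 * b1) ^+ 2.
    by rewrite exprMn hp hq; ring.
  have : (d1 * b1 + d2 * b2) ^+ 2 <= (p * q) ^+ 2 by rewrite e lerDl sqr_ge0.
  case: (lerP 0 (d1 * b1 + d2 * b2)) => s.
    by rewrite ler_pXn2r ?nnegrE ?mulr_ge0.
  by move=> _; apply: le_trans (ltW s) _; rewrite mulr_ge0.
have E1 : (p + q) ^+ 2 = p ^+ 2 + q ^+ 2 + 2 * (p * q) by ring.
rewrite E1 hp hq; lra.
Qed.

Lemma cabs2_csubC (R : realType) (a b : R * R) : cabs2 (csub a b) = cabs2 (csub b a).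
Proof. rewrite /cabs2 /csub /=; ring. Qed.

Lemma cabs2_ge0 (R : realType) (a : R * R) : 0 <= cabs2 a.
Proof. by rewrite /cabs2 addr_ge0 // sqr_ge0. Qed.

Lemma sqrt_tri (R : realType) (p d q : R) : 0 <= d -> 0 <= q ->
  p <= (Num.sqrt d + Num.sqrt q) ^+ 2 -> Num.sqrt p <= Num.sqrt d + Num.sqrt q.
Proof.
move=> d0 q0 h; apply: le_trans (ler_wsqrtr h) _.
by rewrite sqrtr_sqr ger0_norm // addr_ge0 // sqrtr_ge0.
Qed.

Lemma max_dist (R : realType) (a b c d e : R) :
  `|a - c| <= e -> `|b - d| <= e -> `|Num.max a b - Num.max c d| <= e.
Proof.
rewrite !ler_norml => /andP[h1 h2] /andP[h3 h4].
case: (leP a b) => ab; case: (leP c d) => cd; apply/andP; split; lra.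
Qed.

Lemma sqrt_max (R : realType) (p q : R) :
  Num.sqrt (Num.max p q) = Num.max (Num.sqrt p) (Num.sqrt q).
Proof.
case: (leP p q) => pq.
  by rewrite (max_idPr (ler_wsqrtr pq)).
by rewrite (max_idPl (ler_wsqrtr (ltW pq))).
Qed.

Section Tri.
Variables (R : realType) (G S : topologicalType) (gG : groupoid G) (gS : groupoid S)
  (t : twist_data R G S) (HgG : is_groupoid gG) (Ht : is_twist gG gS t).
Hypothesis pisurj : forall y, exists s, tpi t s = y.

Lemma sabs2_ge0 (F : S -> R * R) y : (0 <= sabs2 t F y)%E.
Proof.
have [s <-] := pisurj y; apply: le_trans (sabs2_ge t F s).
by rewrite lee_fin cabs2_ge0.
Qed.

Lemma tri_esum (A : set G) (F1 F2 D : S -> R * R) (HF1 : is_section gS t F1)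
  (HF2 : is_section gS t F2)
  (HD : forall s, cabs2 (F1 s) <= (Num.sqrt (cabs2 (D s)) + Num.sqrt (cabs2 (F2 s))) ^+ 2)
  (B C : R) :
  esum A (sabs2 t D) = B%:E -> esum A (sabs2 t F2) = C%:E ->
  (esum A (sabs2 t F1) <= ((Num.sqrt B + Num.sqrt C) ^+ 2)%:E)%E.
Proof.
move=> eB eC; apply: esum_mink eB eC.
- by move=> y _; exact: sabs2_ge0.
- by move=> y _; exact: sabs2_ge0.
move=> y _; have [s <-] := pisurj y => bf cf.
rewrite (sabs2E HgG Ht HF1) (sabs2E HgG Ht HF2) /= lee_fin.
apply: le_trans (HD s) _.
have h : cabs2 (D s) <= fine (sabs2 t D (tpi t s)).
  rewrite -lee_fin fineK //; exact: (@sabs2_ge R G S t D s).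
have := ler_wsqrtr h; have := sqrtr_ge0 (cabs2 (D s)); have := sqrtr_ge0 (cabs2 (F2 s)).
nra.
Qed.
End Tri.
Unset Implicit Arguments.
Theorem lemma3p2 (R : realType) (G S : topologicalType)
  (gG : groupoid G) (gS : groupoid S) (t : twist_data R G S)
  (HG : etale_lch_groupoid gG) (Ht : is_twist gG gS t)
  (F : S -> R * R) (HF : l2_sec gG gS t F) :
  {within units gG, continuous (fun x : G =>
     Num.sqrt (fine (Order.max (sum_src gG t F x) (sum_rng gG t F x))))}.
Proof.
have HG' := HG; case: HG' => [[HgG srcc rngc invc mulc] hG lc hr].
have Ht' := Ht; case: Ht' => _ [[_ _ pisurj _ _] _].
case: HF => [secF contF [Fn [HFn conv]]].
pose D n := fun s => csub (F s) (Fn n s).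
pose fr (F' : S -> R * R) x :=
  Num.sqrt (fine (Order.max (sum_src gG t F' x) (sum_rng gG t F' x))).
have secFn n : is_section gS t (Fn n) by case: (HFn n).
have frE F' x : sum_src gG t F' x \is a fin_num -> sum_rng gG t F' x \is a fin_num ->
    fr F' x = Num.max (Num.sqrt (fine (sum_src gG t F' x))) (Num.sqrt (fine (sum_rng gG t F' x))).
  by move=> f1 f2; rewrite /fr -sqrt_max -(fine_max f1 f2).
have contn n : continuous (fr (Fn n)).
  have [finr contr fins conts] := Cc_sums HG Ht (HFn n).
  have -> : fr (Fn n) = (fun x => Num.max (Num.sqrt (fine (sum_src gG t (Fn n) x)))
                                      (Num.sqrt (fine (sum_rng gG t (Fn n) x)))).
    by apply: funext => x; apply: frE.
  move=> x.
  have c1 : {for x, continuous (fun x => Num.sqrt (fine (sum_src gG t (Fn n) x)))}.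
    by apply: continuous_comp; [exact: conts | exact: sqrt_continuous].
  have c2 : {for x, continuous (fun x => Num.sqrt (fine (sum_rng gG t (Fn n) x)))}.
    by apply: continuous_comp; [exact: contr | exact: sqrt_continuous].
  exact: (continuous_max c1 c2).
have side : forall n (δ : R) (A : set G), 0 <= δ ->
    (esum A (sabs2 t (D n)) <= δ%:E)%E -> esum A (sabs2 t (Fn n)) \is a fin_num ->
    esum A (sabs2 t F) \is a fin_num /\
    `|Num.sqrt (fine (esum A (sabs2 t F))) - Num.sqrt (fine (esum A (sabs2 t (Fn n))))| <= Num.sqrt δ.
  move=> n δ A δ0 hD fN.
  have D0 : (0 <= esum A (sabs2 t (D n)))%E by apply: esum_ge0 => y _; exact: sabs2_ge0.
  have F0 : (0 <= esum A (sabs2 t F))%E by apply: esum_ge0 => y _; exact: sabs2_ge0.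
  have N0 : (0 <= esum A (sabs2 t (Fn n)))%E by apply: esum_ge0 => y _; exact: sabs2_ge0.
  have fD : esum A (sabs2 t (D n)) \is a fin_num.
    by rewrite ge0_fin_numE // (le_lt_trans hD) // ltry.
  have h1 := tri_esum HgG Ht pisurj secF (secFn n)
    (fun s => cabs_tri (F s) (Fn n s)) (esym (fineK fD)) (esym (fineK fN)).
  have fF : esum A (sabs2 t F) \is a fin_num.
    by rewrite ge0_fin_numE // (le_lt_trans h1) // ltry.
  have HD' : forall s, cabs2 (Fn n s) <=
      (Num.sqrt (cabs2 (D n s)) + Num.sqrt (cabs2 (F s))) ^+ 2.
    by move=> s; rewrite /D cabs2_csubC; exact: cabs_tri.
  have h2 := tri_esum HgG Ht pisurj (secFn n) secF HD' (esym (fineK fD)) (esym (fineK fF)).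
  split => //.
  have pD0 : 0 <= fine (esum A (sabs2 t (D n))) by rewrite fine_ge0.
  have pF0 : 0 <= fine (esum A (sabs2 t F)) by rewrite fine_ge0.
  have pN0 : 0 <= fine (esum A (sabs2 t (Fn n))) by rewrite fine_ge0.
  have pDd : fine (esum A (sabs2 t (D n))) <= δ by rewrite -lee_fin fineK.
  rewrite -[X in (X <= _)%E](fineK fF) lee_fin in h1.
  rewrite -[X in (X <= _)%E](fineK fN) lee_fin in h2.
  have s1 := sqrt_tri pD0 pN0 h1.
  have s2 := sqrt_tri pD0 pF0 h2.
  have s3 := ler_wsqrtr pDd.
  rewrite ler_norml; apply/andP; split; lra.
have unif : forall n (δ : R), 0 <= δ -> (norm2sq gG t (D n) <= δ%:E)%E ->
    forall x, units gG x -> `|fr F x - fr (Fn n) x| <= Num.sqrt δ.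
  move=> n δ δ0 nD x ux.
  have mx : (Order.max (sum_src gG t (D n) x) (sum_rng gG t (D n) x) <= norm2sq gG t (D n))%E.
    by apply: ereal_sup_ubound; exists x.
  have hs : (sum_src gG t (D n) x <= δ%:E)%E.
    by apply: le_trans nD; apply: le_trans mx; rewrite le_max lexx.
  have hr' : (sum_rng gG t (D n) x <= δ%:E)%E.
    by apply: le_trans nD; apply: le_trans mx; rewrite le_max lexx orbT.
  have [finr _ fins _] := Cc_sums HG Ht (HFn n).
  have [fs ds] := side n δ _ δ0 hs (fins x).
  have [fr' dr] := side n δ _ δ0 hr' (finr x).
  rewrite (frE F x fs fr') (frE (Fn n) x (fins x) (finr x)).
  exact: max_dist.
apply/subspace_continuousP => x0 ux0.
apply/cvgrPdist_le => e e0.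
pose δ := (e / 3) ^+ 2.
have e3 : 0 < e / 3 by rewrite divr_gt0.
have δ0 : 0 < δ by rewrite exprn_gt0.
have [n nD] : exists n, (norm2sq gG t (D n) <= δ%:E)%E.
  have [H1 H2] := (fine_cvgP _ _).1 conv.
  move/cvgrPdist_le: H2 => /(_ δ δ0) H3.
  have [n [fn ln]] := filter_ex (filterI H1 H3).
  exists n; rewrite -(fineK fn) lee_fin; move: ln; rewrite /= sub0r normrN => ln.
  exact: le_trans (ler_norm _) ln.
have sδ : Num.sqrt δ = e / 3 by rewrite sqrtr_sqr ger0_norm // ltW.
have := contn n x0; move/cvgrPdist_le => /(_ (e / 3) e3) cn.
have u0 := unif n δ (ltW δ0) nD x0 ux0.
have H : \forall x \near x0, units gG x -> `|fr F x0 - fr F x| <= e.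
  apply: filterS cn => x hx ux; have ux' := unif n δ (ltW δ0) nD x ux.
  move: u0 ux' hx; rewrite sδ !ler_norml => /andP[a1 a2] /andP[b1 b2] /andP[c1 c2].
  apply/andP; split; lra.
exact: H.
Qed.
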